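(* If $s>0$ is a knot of $p_0$, then with probability one there exists $n_0$ such that for all $n\ge n_0$, $s$ is a knot of $\hat p_n$.
   Context: For a real sequence $p=(p(k))_{k\in\mathbb N}$ (with $\mathbb N=\{0,1,2,\dots\}$) and $k\ge1$ let $\Delta p(k)=p(k+1)-2p(k)+p(k-1)$. A sequence $p$ is convex if $\Delta p(k)\ge0$ for all integers $k\ge1$; let $\mathcal C$ be the set of convex sequences with $\sum_k p(k)^2<\infty$. A knot of a sequence $p$ is an integer $k\ge1$ with $\Delta p(k)>0$. Let $p_0$ be a convex probability mass function (pmf) on $\mathbb N$ whose support is either $\mathbb N$ or $\{0,1,\dots,S\}$ for some integer $S\ge1$. Let $X_1,X_2,\dots$ be i.i.d. with pmf $p_0$, let $p_n(j)=\frac1n\sum_{i=1}^n\mathbb 1\{X_i=j\}$, and let the least squares estimator $\hat p_n$ be the unique minimizer over $\mathcal C$ of $\Phi_n(p)=\frac12\sum_{j\in\mathbb N}(p_n(j)-p(j))^2$. *)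

(* Defs.v *)
From Stdlib Require Import Reals Lra List.
Open Scope R_scope.

Definition rseq := nat -> R.

(* second difference, used for k >= 1 *)
Definition Delta (p : rseq) (k : nat) : R := p (S k) - 2 * p k + p (pred k).

Definition convex_seq (p : rseq) : Prop := forall k, (1 <= k)%nat -> Delta p k >= 0.

Definition square_summable (p : rseq) : Prop :=
  exists l, infinite_sum (fun k => (p k) ^ 2) l.

Definition inC (p : rseq) : Prop := convex_seq p /\ square_summable p.

Definition is_knot (p : rseq) (k : nat) : Prop := (1 <= k)%nat /\ Delta p k > 0.

Definition is_pmf (p : rseq) : Prop := (forall k, 0 <= p k) /\ infinite_sum p 1.

Definition support_ok (p : rseq) : Prop :=
  (forall k, p k > 0) \/
  exists S0 : nat, (1 <= S0)%nat /\ forall k, (p k > 0 <-> (k <= S0)%nat).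

(* sample path: omega i is the observation X_{i+1} *)
Definition sample := nat -> nat.

Fixpoint count_obs (omega : sample) (j n : nat) : nat :=
  match n with
  | O => O
  | S m => (count_obs omega j m + if Nat.eqb (omega m) j then 1 else 0)%nat
  end.

Definition emp (omega : sample) (n : nat) : rseq :=
  fun j => INR (count_obs omega j n) / INR n.

Definition Phi_val (omega : sample) (n : nat) (p : rseq) (v : R) : Prop :=
  infinite_sum (fun j => / 2 * (emp omega n j - p j) ^ 2) v.

Definition is_LSE (omega : sample) (n : nat) (q : rseq) : Prop :=
  inC q /\
  forall p, inC p -> forall vq vp, Phi_val omega n q vq -> Phi_val omega n p vp -> vq <= vp.

(* i.i.d. product measure with marginal p0 on N^N, via null sets of the
   outer measure generated by cylinder sets *)
Fixpoint in_cyl (l : list nat) (omega : sample) (i : nat) : Prop :=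
  match l with
  | nil => True
  | x :: t => omega i = x /\ in_cyl t omega (S i)
  end.

Fixpoint cyl_prob (p0 : rseq) (l : list nat) : R :=
  match l with
  | nil => 1
  | x :: t => p0 x * cyl_prob p0 t
  end.

Definition null_set (p0 : rseq) (E : sample -> Prop) : Prop :=
  forall eps, eps > 0 ->
  exists c : nat -> list nat,
    (forall omega, E omega -> exists m, in_cyl (c m) omega 0) /\
    (forall N, sum_f_R0 (fun m => cyl_prob p0 (c m)) N <= eps).

Definition almost_surely (p0 : rseq) (P : sample -> Prop) : Prop :=
  null_set p0 (fun omega => ~ P omega).

(* Main.v *)
Require Import Defs.
From Stdlib Require Import Reals.
From Stdlib Require Import Lra Lia Classical ClassicalEpsilon List.
Open Scope R_scope.


Lemma isum_Un (f : nat -> R) l : infinite_sum f l <-> Un_cv (sum_f_R0 f) l.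
Proof. split; intro H; exact H. Qed.

Lemma Un_cv_ext (u v : nat -> R) l : (forall n, u n = v n) -> Un_cv u l -> Un_cv v l.
Proof.
  intros E H eps He. destruct (H eps He) as [N HN]. exists N. intros n Hn.
  rewrite <- E. apply HN; auto.
Qed.

Lemma sum_growing f : (forall k, 0 <= f k) -> Un_growing (sum_f_R0 f).
Proof. intros H n. simpl. specialize (H (S n)). lra. Qed.

Lemma nonneg_sum_cv f B : (forall k, 0 <= f k) -> (forall N, sum_f_R0 f N <= B) ->
  exists l, infinite_sum f l /\ l <= B.
Proof.
  intros Hf HB.
  assert (Hub : has_ub (sum_f_R0 f)).
  { exists B. intros x [i ->]. apply HB. }
  destruct (growing_cv _ (sum_growing f Hf) Hub) as [l Hl].
  exists l. split. exact Hl.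
  destruct (Rle_or_lt l B) as [h|h]; auto.
  destruct (Hl (l - B)) as [N HN]; [lra|].
  specialize (HN N (le_n _)). specialize (HB N). unfold Rdist in HN.
  apply Rabs_def2 in HN. lra.
Qed.

Lemma partial_le_sum f l : (forall k, 0 <= f k) -> infinite_sum f l ->
  forall N, sum_f_R0 f N <= l.
Proof. intros Hf Hl N. apply growing_ineq; auto. apply sum_growing; auto. Qed.

Lemma term_le_partial f k : (forall k, 0 <= f k) -> f k <= sum_f_R0 f k.
Proof.
  intros Hf. destruct k; simpl. lra.
  pose proof (cond_pos_sum f k Hf). lra.
Qed.

Lemma term_le_sum f l k : (forall k, 0 <= f k) -> infinite_sum f l -> f k <= l.
Proof.
  intros Hf Hl. eapply Rle_trans. apply term_le_partial; auto.
  apply partial_le_sum; auto.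
Qed.

Lemma sum_nonneg_lim f l : (forall k, 0 <= f k) -> infinite_sum f l -> 0 <= l.
Proof. intros Hf Hl. eapply Rle_trans. apply (Hf 0%nat). apply (term_le_sum f l 0); auto. Qed.

Lemma isum_plus f g a b : infinite_sum f a -> infinite_sum g b ->
  infinite_sum (fun k => f k + g k) (a + b).
Proof.
  intros Ha Hb. apply isum_Un.
  apply Un_cv_ext with (u := fun n => sum_f_R0 f n + sum_f_R0 g n).
  intro n. rewrite sum_plus. reflexivity.
  apply CV_plus; auto.
Qed.

Lemma isum_scal f a c : infinite_sum f a -> infinite_sum (fun k => c * f k) (c * a).
Proof.
  intros Ha. apply isum_Un.
  apply Un_cv_ext with (u := fun n => c * sum_f_R0 f n).
  intro n. rewrite scal_sum. apply sum_eq. intros; ring.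
  apply CV_mult; auto.
  intros eps He. exists 0%nat. intros. unfold Rdist. rewrite Rminus_diag, Rabs_R0. lra.
Qed.

Lemma isum_ext f g a : (forall k, f k = g k) -> infinite_sum f a -> infinite_sum g a.
Proof.
  intros E H. apply isum_Un. apply Un_cv_ext with (u := sum_f_R0 f); auto.
  intro n. apply sum_eq. intros; auto.
Qed.

Lemma isum_unique f a b : infinite_sum f a -> infinite_sum f b -> a = b.
Proof. intros Ha Hb. eapply UL_sequence; eauto. Qed.

Lemma sum_scal_l c f N : sum_f_R0 (fun i => c * f i) N = c * sum_f_R0 f N.
Proof. rewrite scal_sum. apply sum_eq. intros; ring. Qed.

Lemma LSE_close omega n q p0 B : inC p0 -> is_LSE omega n q ->
  (forall N, sum_f_R0 (fun j => (emp omega n j - p0 j)^2) N <= B) ->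
  forall k, (q k - p0 k)^2 <= 2*B.
Proof.
  intros [Cp0 [lp Hlp]] [[Cq [lq Hlq]] Hmin] HB k.
  set (e := emp omega n) in *.
  assert (Hsq : forall f : nat -> R, forall k, 0 <= (f k)^2) by (intros; apply pow2_ge_0).
  destruct (nonneg_sum_cv (fun j => (e j - p0 j)^2) B) as [E0 [HE0 E0B]].
  { intro; apply pow2_ge_0. } { exact HB. }
  destruct (nonneg_sum_cv (fun j => (p0 j - q j)^2) (2*lp + 2*lq)) as [D [HD _]].
  { intro; apply pow2_ge_0. }
  { intro N. apply Rle_trans with (sum_f_R0 (fun j => 2 * (p0 j)^2 + 2 * (q j)^2) N).
    apply sum_Rle. intros. cbv beta. pose proof (pow2_ge_0 (p0 n0 + q n0)). nra.
    rewrite sum_plus, !sum_scal_l.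
    pose proof (partial_le_sum _ _ (fun k => pow2_ge_0 (p0 k)) Hlp N).
    pose proof (partial_le_sum _ _ (fun k => pow2_ge_0 (q k)) Hlq N). lra. }
  destruct (nonneg_sum_cv (fun j => (e j - q j)^2) (2*B + 2*D)) as [A [HA _]].
  { intro; apply pow2_ge_0. }
  { intro N. apply Rle_trans with (sum_f_R0 (fun j => 2 * (e j - p0 j)^2 + 2 * (p0 j - q j)^2) N).
    apply sum_Rle. intros. cbv beta. replace (e n0 - q n0) with ((e n0 - p0 n0) + (p0 n0 - q n0)) by ring.
    generalize (e n0 - p0 n0) (p0 n0 - q n0). intros x y. pose proof (pow2_ge_0 (x - y)). nra.
    rewrite sum_plus, !sum_scal_l.
    pose proof (HB N).
    pose proof (partial_le_sum _ _ (fun k => pow2_ge_0 (p0 k - q k)) HD N). lra. }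
  set (ph := fun j => (q j + p0 j) / 2).
  assert (Cph : inC ph).
  { split.
    - intros j Hj. specialize (Cp0 j Hj). specialize (Cq j Hj). unfold Defs.Delta in *. unfold ph. cbv beta. lra.
    - destruct (nonneg_sum_cv (fun j => (ph j)^2) ((lq + lp)/2)) as [L [HL _]].
      { intro; apply pow2_ge_0. }
      { intro N. apply Rle_trans with (sum_f_R0 (fun j => /2 * (q j)^2 + /2 * (p0 j)^2) N).
        apply sum_Rle. intros. cbv beta. unfold ph. pose proof (pow2_ge_0 (q n0 - p0 n0)). nra.
        rewrite sum_plus, !sum_scal_l.
        pose proof (partial_le_sum _ _ (fun k => pow2_ge_0 (p0 k)) Hlp N).
        pose proof (partial_le_sum _ _ (fun k => pow2_ge_0 (q k)) Hlq N). lra. }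
      exists L. exact HL. }
  assert (Vq : Phi_val omega n q (/2 * A)).
  { unfold Phi_val. apply isum_scal. exact HA. }
  assert (Vph : Phi_val omega n ph (/2 * A * /2 + (/2 * E0 * /2 + - /4 * D * /2))).
  { unfold Phi_val.
    apply isum_ext with (f := fun j => /2 * (e j - q j)^2 * /2 + (/2 * (e j - p0 j)^2 * /2 + - /4 * (p0 j - q j)^2 * /2)).
    { intro j. fold e. unfold ph. field. }
    apply isum_plus. rewrite Rmult_comm. apply isum_ext with (f := fun j => /2 * (/2 * (e j - q j)^2)).
    intros; ring. apply isum_scal, isum_scal; auto.
    apply isum_plus. rewrite Rmult_comm. apply isum_ext with (f := fun j => /2 * (/2 * (e j - p0 j)^2)).
    intros; ring. apply isum_scal, isum_scal; auto.
    rewrite Rmult_comm. apply isum_ext with (f := fun j => /2 * (- /4 * (p0 j - q j)^2)).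
    intros; ring. apply isum_scal, isum_scal; auto. }
  pose proof (Hmin ph Cph _ _ Vq Vph) as Hle.
  pose proof (sum_nonneg_lim _ _ (fun j => pow2_ge_0 (e j - q j)) HA).
  pose proof (term_le_sum _ _ k (fun j => pow2_ge_0 (p0 j - q j)) HD). simpl in H0.
  replace ((q k - p0 k)^2) with ((p0 k - q k)^2) by ring. lra.
Qed.

Definition cover := nat -> option (list nat).
Definition mass (p0 : rseq) (c : cover) (m : nat) : R :=
  match c m with Some l => cyl_prob p0 l | None => 0 end.
Definition covers (c : cover) (E : sample -> Prop) : Prop :=
  forall omega, E omega -> exists m l, c m = Some l /\ in_cyl l omega 0.
Definition CW p0 (E : sample -> Prop) (w : R) : Prop :=
  forall eps, eps > 0 -> exists c, covers c E /\ forall N, sum_f_R0 (mass p0 c) N <= w + eps.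

Lemma sum_zero N : sum_f_R0 (fun _ => 0) N = 0.
Proof. induction N; simpl; lra. Qed.

Lemma sum_mono_nonneg f n m : (forall k, 0 <= f k) -> (n <= m)%nat -> sum_f_R0 f n <= sum_f_R0 f m.
Proof.
  intros Hf H. induction H. lra. simpl. specialize (Hf (S m)). lra.
Qed.

Lemma sum_scal_lB c f N : sum_f_R0 (fun i => c * f i) N = c * sum_f_R0 f N.
Proof. rewrite scal_sum. apply sum_eq. intros; ring. Qed.

Lemma geom_half N : sum_f_R0 (fun k => (/2)^(S k)) N = 1 - (/2)^(S N).
Proof. induction N; simpl in *. field. rewrite IHN. field. Qed.

Lemma pow_half_pos k : 0 < (/2)^k.
Proof. apply pow_lt. lra. Qed.

Section Cov.
Variable p0 : rseq.
Hypothesis Hp : forall k, 0 <= p0 k.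

Lemma cyl_prob_nonneg l : 0 <= cyl_prob p0 l.
Proof. induction l; simpl. lra. apply Rmult_le_pos; auto. Qed.

Lemma mass_nonneg c m : 0 <= mass p0 c m.
Proof. unfold mass. destruct (c m). apply cyl_prob_nonneg. lra. Qed.

Lemma CW_mono (E F : sample -> Prop) w w' : (forall om, E om -> F om) -> w <= w' ->
  CW p0 F w -> CW p0 E w'.
Proof.
  intros HEF Hw H eps He. destruct (H eps He) as [c [Hc Hs]]. exists c. split.
  intros om Hom. apply Hc, HEF, Hom. intro N. specialize (Hs N). lra.
Qed.

Lemma CW_empty (E : sample -> Prop) : (forall om, ~ E om) -> CW p0 E 0.
Proof.
  intros HE eps He. exists (fun _ => None). split.
  intros om Hom. exfalso. apply (HE om Hom).
  intro N. unfold mass. rewrite sum_zero. lra.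
Qed.

Lemma CW_True (E : sample -> Prop) : CW p0 E 1.
Proof.
  intros eps He. exists (fun m => match m with O => Some nil | S _ => None end). split.
  intros om _. exists O, nil. simpl. auto.
  intro N. assert (sum_f_R0 (mass p0 (fun m => match m with O => Some nil | S _ => None end)) N = 1).
  { induction N; simpl. unfold mass. simpl. lra. rewrite IHN. unfold mass. lra. }
  lra.
Qed.

Definition shift (om : sample) : sample := fun i => om (S i).

Lemma in_cyl_shift l om i : in_cyl l (shift om) i <-> in_cyl l om (S i).
Proof.
  revert i. induction l; intro i; simpl. tauto.
  unfold shift at 1. rewrite IHl. tauto.
Qed.

Lemma CW_prefix x (E : sample -> Prop) w : CW p0 E w ->
  CW p0 (fun om => om O = x /\ E (shift om)) (p0 x * w).
Proof.
  intros H eps He.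
  assert (Hx := Hp x).
  destruct (H (eps / (p0 x + 1))) as [c [Hc Hs]].
  { apply Rdiv_lt_0_compat; lra. }
  exists (fun m => match c m with Some l => Some (x :: l) | None => None end). split.
  - intros om [H0 Hom]. destruct (Hc _ Hom) as [m [l [Hm Hl]]].
    exists m, (x :: l). rewrite Hm. split; auto. simpl. split; auto.
    apply in_cyl_shift. exact Hl.
  - intro N.
    assert (E1 : sum_f_R0 (mass p0 (fun m => match c m with Some l => Some (x :: l) | None => None end)) N
      = p0 x * sum_f_R0 (mass p0 c) N).
    { rewrite scal_sum. apply sum_eq. intros i _. unfold mass. destruct (c i); simpl; ring. }
    rewrite E1. specialize (Hs N).
    apply Rle_trans with (p0 x * (w + eps / (p0 x + 1))).
    apply Rmult_le_compat_l; auto.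
    assert (p0 x * (eps / (p0 x + 1)) <= eps).
    { unfold Rdiv. rewrite <- Rmult_assoc. rewrite (Rmult_comm (p0 x) eps), Rmult_assoc.
      rewrite <- (Rmult_1_r eps) at 2. apply Rmult_le_compat_l. lra.
      apply Rmult_le_reg_r with (p0 x + 1). lra. rewrite Rmult_assoc, Rinv_l. lra. lra. }
    lra.
Qed.

Fixpoint merge (fuel : nat) (cs : nat -> cover) (m : nat) : option (list nat) :=
  match fuel with
  | O => None
  | S f => if Nat.even m then cs O (Nat.div2 m) else merge f (fun k => cs (S k)) (Nat.div2 m)
  end.

Definition U (cs : nat -> cover) : cover := fun m => merge (S m) cs m.

Lemma merge_fuel f g cs m : (m < f)%nat -> (m < g)%nat -> merge f cs m = merge g cs m.
Proof.
  revert g cs m. induction f as [|f IH]; intros g cs m Hf Hg. lia.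
  destruct g as [|g]. lia. simpl. destruct (Nat.even m) eqn:Ev. reflexivity.
  assert (0 < m)%nat. { destruct m. discriminate. lia. }
  pose proof (Nat.lt_div2 m H). apply IH; lia.
Qed.

Lemma merge_S f cs m : merge (S f) cs m =
  if Nat.even m then cs O (Nat.div2 m) else merge f (fun k => cs (S k)) (Nat.div2 m).
Proof. reflexivity. Qed.

Lemma U_even cs i : U cs (2 * i)%nat = cs O i.
Proof. unfold U. rewrite merge_S. rewrite Nat.even_even, Nat.div2_double. reflexivity. Qed.

Lemma U_odd cs i : U cs (S (2 * i))%nat = U (fun k => cs (S k)) i.
Proof.
  unfold U. rewrite merge_S. replace (Nat.even (S (2*i))) with false.
  rewrite Nat.div2_succ_double. apply merge_fuel; lia.
  rewrite <- (Nat.even_odd i). f_equal. lia.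
Qed.

Lemma U_covers k : forall cs i, exists m, U cs m = cs k i.
Proof.
  induction k; intros cs i.
  - exists (2 * i)%nat. apply U_even.
  - destruct (IHk (fun k => cs (S k)) i) as [m Hm]. exists (S (2 * m)). rewrite U_odd. exact Hm.
Qed.

Lemma sum_S f n : sum_f_R0 f (S n) = sum_f_R0 f n + f (S n).
Proof. reflexivity. Qed.

Lemma U_sum_odd cs M : sum_f_R0 (mass p0 (U cs)) (S (2 * M)) =
  sum_f_R0 (mass p0 (cs O)) M + sum_f_R0 (mass p0 (U (fun k => cs (S k)))) M.
Proof.
  induction M.
  - change (mass p0 (U cs) 0 + mass p0 (U cs) 1 = mass p0 (cs O) 0 + mass p0 (U (fun k => cs (S k))) 0).
    unfold mass. rewrite (U_even cs 0 : U cs 0%nat = _). rewrite (U_odd cs 0 : U cs 1%nat = _). reflexivity.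
  - replace (S (2 * S M)) with (S (S (S (2 * M)))) by lia.
    rewrite (sum_S _ (S (S (2*M)))), (sum_S _ (S (2*M))), IHM, (sum_S (mass p0 (cs O)) M), (sum_S _ M).
    assert (H1 : U cs (S (S (2*M))) = cs O (S M)).
    { replace (S (S (2*M))) with (2 * S M)%nat by lia. apply U_even. }
    assert (H2 : U cs (S (S (S (2*M)))) = U (fun k => cs (S k)) (S M)).
    { replace (S (S (S (2*M)))) with (S (2 * S M))%nat by lia. apply U_odd. }
    unfold mass. rewrite H1, H2. ring.
Qed.

Lemma U_sum N : forall cs (B : nat -> R), (forall k M, sum_f_R0 (mass p0 (cs k)) M <= B k) ->
  (forall k, 0 <= B k) -> sum_f_R0 (mass p0 (U cs)) N <= sum_f_R0 B N.
Proof.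
  induction N as [N IH] using (well_founded_induction Wf_nat.lt_wf). intros cs B HB HB0.
  destruct N as [|N].
  - simpl. unfold mass. replace 0%nat with (2*0)%nat by lia. rewrite U_even.
    specialize (HB O O). simpl in HB. unfold mass in HB. exact HB.
  - set (d := Nat.div2 (S N)).
    assert (Hd : (S N <= S (2 * d))%nat).
    { pose proof (Nat.div2_odd (S N)). destruct (Nat.odd (S N)); cbn [Nat.b2n] in H; unfold d; lia. }
    assert (Hd2 : (d < S N)%nat) by (apply Nat.lt_div2; lia).
    apply Rle_trans with (sum_f_R0 (mass p0 (U cs)) (S (2 * d))).
    apply sum_mono_nonneg; auto. apply mass_nonneg.
    rewrite U_sum_odd.
    pose proof (IH d Hd2 (fun k => cs (S k)) (fun k => B (S k)) (fun k => HB (S k)) (fun k => HB0 (S k))).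
    pose proof (HB O d).
    rewrite (decomp_sum B (S N)) by lia. simpl pred.
    assert (sum_f_R0 (fun i => B (S i)) d <= sum_f_R0 (fun i => B (S i)) N).
    { apply sum_mono_nonneg. intros; auto. lia. }
    pose proof (cond_pos_sum (mass p0 (cs O)) d (fun m => mass_nonneg _ m)).
    assert (sum_f_R0 (mass p0 (cs O)) d <= B O).
    { auto. }
    lra.
Qed.

Lemma CW_union (E : nat -> sample -> Prop) (w : nat -> R) W :
  (forall k, CW p0 (E k) (w k)) -> (forall k, 0 <= w k) -> (forall K, sum_f_R0 w K <= W) ->
  CW p0 (fun om => exists k, E k om) W.
Proof.
  intros HE Hw HW eps He.
  assert (X : forall k, {c : cover | covers c (E k) /\
     forall N, sum_f_R0 (mass p0 c) N <= w k + eps * (/2)^(S k)}).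
  { intro k. apply constructive_indefinite_description. apply HE.
    pose proof (pow_half_pos (S k)). nra. }
  set (cs := fun k => proj1_sig (X k)).
  exists (U cs). split.
  - intros om [k Hk]. destruct (proj1 (proj2_sig (X k)) om Hk) as [i [l [Hi Hl]]].
    destruct (U_covers k cs i) as [m Hm]. exists m, l. split; auto. rewrite Hm. exact Hi.
  - intro N.
    eapply Rle_trans. apply (U_sum N cs (fun k => w k + eps * (/2)^(S k))).
    intros k M. apply (proj2 (proj2_sig (X k))).
    intro k. pose proof (pow_half_pos (S k)). specialize (Hw k). nra.
    rewrite sum_plus, sum_scal_lB, geom_half. pose proof (HW N). pose proof (pow_half_pos (S N)). nra.
Qed.

Lemma null_CW E : null_set p0 E -> forall eps, eps > 0 -> CW p0 E eps.
Proof.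
  intros H eps He eps' He'. destruct (H eps He) as [c [Hc Hs]].
  exists (fun m => Some (c m)). split.
  - intros om Hom. destruct (Hc om Hom) as [m Hm]. exists m, (c m). auto.
  - intro N. specialize (Hs N).
    assert (sum_f_R0 (mass p0 (fun m => Some (c m))) N = sum_f_R0 (fun m => cyl_prob p0 (c m)) N).
    { apply sum_eq. intros; reflexivity. }
    lra.
Qed.

Fixpoint rep (x k : nat) : list nat := match k with O => nil | S k => x :: rep x k end.

Lemma cyl_rep x k : cyl_prob p0 (rep x k) = p0 x ^ k.
Proof. induction k; simpl; auto. rewrite IHk. ring. Qed.

Lemma CW_null x0 E : p0 x0 < 1 -> (forall eps, eps > 0 -> CW p0 E eps) -> null_set p0 E.
Proof.
  intros Hx H eps He.
  destruct (H (eps/4) ltac:(lra) (eps/4) ltac:(lra)) as [c [Hc Hs]].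
  assert (F : forall m:nat, {k : nat | p0 x0 ^ k <= eps/2 * (/2)^(S m)}).
  { intro m. apply constructive_indefinite_description.
    assert (Hy : 0 < eps/2 * (/2)^(S m)).
    { pose proof (pow_half_pos (S m)). nra. }
    assert (Ha : Rabs (p0 x0) < 1). { rewrite Rabs_right. lra. apply Rle_ge, Hp. }
    destruct (pow_lt_1_zero (p0 x0) Ha _ Hy) as [N HN].
    exists N. specialize (HN N (le_n _)). rewrite Rabs_right in HN. lra.
    apply Rle_ge, pow_le, Hp. }
  exists (fun m => match c m with Some l => l | None => rep x0 (proj1_sig (F m)) end). split.
  - intros om Hom. destruct (Hc om Hom) as [m [l [Hm Hl]]]. exists m. rewrite Hm. exact Hl.
  - intro N. apply Rle_trans with (sum_f_R0 (fun m => mass p0 c m + eps/2 * (/2)^(S m)) N).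
    + apply sum_Rle. intros m _. cbv beta. unfold mass. destruct (c m).
      * pose proof (pow_half_pos (S m)). nra.
      * rewrite cyl_rep. pose proof (proj2_sig (F m)). lra.
    + rewrite sum_plus, sum_scal_lB, geom_half. specialize (Hs N).
      pose proof (pow_half_pos (S N)). nra.
Qed.

Lemma AS_mono (P Q : sample -> Prop) : (forall om, P om -> Q om) -> almost_surely p0 P -> almost_surely p0 Q.
Proof.
  intros HPQ H eps He. destruct (H eps He) as [c [Hc Hs]]. exists c; split; auto.
Qed.

Lemma AS_and x0 (P Q : sample -> Prop) : p0 x0 < 1 -> almost_surely p0 P -> almost_surely p0 Q ->
  almost_surely p0 (fun om => P om /\ Q om).
Proof.
  intros Hx HP HQ. unfold almost_surely. apply (CW_null x0 _ Hx). intros eps He.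
  set (E := fun k om => match k with O => ~ P om | 1%nat => ~ Q om | _ => False end).
  set (w := fun k : nat => match k with O => eps/2 | 1%nat => eps/2 | _ => 0 end).
  apply CW_mono with (F := fun om => exists k, E k om) (w := eps).
  { intros om Hom. apply not_and_or in Hom. destruct Hom. exists O; exact H. exists 1%nat; exact H. }
  lra.
  apply CW_union with (w := w).
  - intros [|[|k]]; unfold E, w.
    + apply null_CW; auto. lra.
    + apply null_CW; auto. lra.
    + apply CW_empty. auto.
  - intros [|[|k]]; unfold w; lra.
  - assert (Hk : forall K, sum_f_R0 w (S K) = eps).
    { induction K. simpl. unfold w. lra. rewrite sum_S, IHK. unfold w. lra. }
    intros [|K]. simpl. unfold w. lra. rewrite Hk. lra.
Qed.

End Cov.

Fixpoint Gsum (g : nat -> R) (om : sample) (n : nat) : R :=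
  match n with O => 0 | S m => Gsum g om m + g (om m) end.

Lemma Gsum_S g om n : Gsum g om (S n) = g (om O) + Gsum g (shift om) n.
Proof.
  induction n. simpl; ring.
  change (Gsum g om (S (S n))) with (Gsum g om (S n) + g (om (S n))). rewrite IHn.
  simpl. unfold shift. ring.
Qed.

Fixpoint cnt (h : nat -> bool) (om : sample) (n : nat) : nat :=
  match n with O => O | S m => (cnt h om m + if h (om m) then 1 else 0)%nat end.

Lemma Gsum_cnt (h : nat -> bool) t c om n :
  Gsum (fun x => (if h x then t else 0) - c) om n = t * INR (cnt h om n) - INR n * c.
Proof.
  induction n. simpl. ring.
  simpl Gsum. rewrite IHn. simpl cnt. rewrite plus_INR, S_INR.
  destruct (h (om n)); simpl; ring.
Qed.

Section Chernoff.
Variable p0 : rseq.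
Hypothesis Hp : forall k, 0 <= p0 k.

Lemma chernoff g Rr : (forall N, sum_f_R0 (fun x => p0 x * exp (g x)) N <= Rr) -> 0 <= Rr ->
  forall n a, CW p0 (fun om => a <= Gsum g om n) (exp (-a) * Rr ^ n).
Proof.
  intros HR HR0 n. induction n; intro a.
  - simpl. destruct (Rle_or_lt a 0).
    + apply CW_mono with (F := fun _ => True) (w := 1); auto.
      pose proof (exp_ineq1_le (-a)). lra. apply CW_True.
    + apply CW_mono with (F := fun om => a <= 0) (w := 0); auto.
      pose proof (exp_pos (-a)). lra. apply CW_empty. intros om Hom. lra.
  - apply CW_mono with (F := fun om => exists x, (fun x om => om O = x /\ (fun om => a - g x <= Gsum g om n) (shift om)) x om)
      (w := exp (-a) * Rr ^ (S n)).
    { intros om H. exists (om O). split; auto. rewrite Gsum_S in H. lra. }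
    lra.
    apply CW_union with (w := fun x => p0 x * (exp (-(a - g x)) * Rr ^ n)); [exact Hp| | |].
    + intro x. apply (CW_prefix p0 Hp x (fun om => a - g x <= Gsum g om n)). apply IHn.
    + intro x. apply Rmult_le_pos; auto. apply Rmult_le_pos. left; apply exp_pos. apply pow_le; auto.
    + intro K.
      rewrite (sum_eq _ (fun x => exp (-a) * Rr ^ n * (p0 x * exp (g x)))).
      rewrite sum_scal_lB. simpl. specialize (HR K).
      assert (0 <= exp (-a) * Rr ^ n). { apply Rmult_le_pos. left; apply exp_pos. apply pow_le; auto. }
      nra.
      intros i _. replace (-(a - g i)) with (-a + g i) by ring. rewrite exp_plus. ring.
Qed.

Lemma upper_dev (h : nat -> bool) P eta : 0 <= P -> eta > 0 ->
  (forall N, sum_f_R0 (fun x => if h x then p0 x else 0) N <= P) ->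
  (forall N, sum_f_R0 (fun x => if h x then 0 else p0 x) N <= 1 - P) ->
  exists r, 0 <= r < 1 /\
   forall n, CW p0 (fun om => INR n * (P + eta) <= INR (cnt h om n)) (r ^ n).
Proof.
  intros HP He S1 S2.
  set (t := eta / (2 * (P + eta))).
  set (c := t * (P + eta)).
  assert (Ht : 0 < t) by (unfold t; apply Rdiv_lt_0_compat; lra).
  assert (Hc : c = eta / 2) by (unfold c, t; field; lra).
  assert (Ht1 : t <= 1/2).
  { unfold t. apply Rmult_le_reg_r with (2 * (P + eta)). lra.
    unfold Rdiv. rewrite Rmult_assoc, Rinv_l by lra. lra. }
  set (Rr := exp (t - c) * P + exp (- c) * (1 - P)).
  assert (HS1P : P <= 1).
  { specialize (S1 O). specialize (S2 O). simpl in *. destruct (h O); pose proof (Hp O); lra. }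
  exists Rr. split; [split|].
  - unfold Rr. pose proof (exp_pos (t - c)). pose proof (exp_pos (- c)). nra.
  - assert (E1 : exp (t - c) = exp t * exp (- c)).
    { unfold Rminus. apply exp_plus. }
    assert (E2 : exp c * exp (- c) = 1).
    { rewrite <- exp_plus. replace (c + - c) with 0 by ring. apply exp_0. }
    assert (E3 : exp t * exp (- t) = 1).
    { rewrite <- exp_plus. replace (t + - t) with 0 by ring. apply exp_0. }
    pose proof (exp_ineq1 (- t) ltac:(lra)) as F1.
    pose proof (exp_ineq1 c ltac:(lra)) as F2.
    pose proof (exp_pos (-c)). pose proof (exp_pos t). pose proof (exp_pos (-t)).
    assert (G1 : exp t * (1 - t) < 1) by nra.
    assert (G2 : (1 - t) * (1 + P * (exp t - 1)) <= 1 - t + P * t) by nra.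
    assert (G3 : 1 + P * (exp t - 1) < exp c).
    { assert (1 - t + P * t < (1 - t) * (1 + c)).
      { rewrite Hc. assert (t * (P + eta) = eta / 2) by (rewrite <- Hc; reflexivity). nra. }
      nra. }
    unfold Rr. rewrite E1.
    replace (exp t * exp (- c) * P + exp (- c) * (1 - P)) with (exp (- c) * (1 + P * (exp t - 1))) by ring.
    nra.
  - intro n.
    apply CW_mono with (F := fun om => 0 <= Gsum (fun x => (if h x then t else 0) - c) om n)
      (w := exp (- 0) * Rr ^ n).
    { intros om H. rewrite Gsum_cnt. unfold c. nra. }
    rewrite Ropp_0, exp_0. lra.
    apply chernoff.
    + intro N.
      rewrite (sum_eq _ (fun x => exp (t - c) * (if h x then p0 x else 0) + exp (- c) * (if h x then 0 else p0 x))).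
      rewrite sum_plus, !sum_scal_lB. unfold Rr.
      specialize (S1 N). specialize (S2 N).
      pose proof (exp_pos (t - c)). pose proof (exp_pos (- c)). nra.
      intros i _. destruct (h i). replace (t - c) with (t - c) by ring. ring.
      replace (0 - c) with (- c) by ring. ring.
    + unfold Rr. pose proof (exp_pos (t - c)). pose proof (exp_pos (- c)). nra.
Qed.

Lemma BC x0 (h : nat -> bool) P eta : p0 x0 < 1 -> 0 <= P -> eta > 0 ->
  (forall N, sum_f_R0 (fun x => if h x then p0 x else 0) N <= P) ->
  (forall N, sum_f_R0 (fun x => if h x then 0 else p0 x) N <= 1 - P) ->
  almost_surely p0 (fun om => exists n0, forall n, (n0 <= n)%nat -> INR (cnt h om n) < INR n * (P + eta)).
Proof.
  intros Hx HP He S1 S2.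
  destruct (upper_dev h P eta HP He S1 S2) as [r [[Hr0 Hr1] Hr]].
  unfold almost_surely. apply (CW_null p0 Hp x0 _ Hx). intros eps Heps.
  assert (Hra : Rabs r < 1) by (rewrite Rabs_right; lra).
  destruct (pow_lt_1_zero r Hra (eps * (1 - r))) as [N HN].
  { apply Rmult_lt_0_compat; lra. }
  specialize (HN N (le_n _)). rewrite Rabs_right in HN by (apply Rle_ge, pow_le; lra).
  apply CW_mono with (F := fun om => exists k, (fun k om => INR (N + k) * (P + eta) <= INR (cnt h om (N + k))) k om)
    (w := eps).
  { intros om Hom. apply (not_ex_all_not _ _) with (n := N) in Hom.
    apply not_all_ex_not in Hom. destruct Hom as [n Hn].
    apply imply_to_and in Hn. destruct Hn as [Hn1 Hn2].
    exists (n - N)%nat. replace (N + (n - N))%nat with n by lia. lra. }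
  lra.
  apply CW_union with (w := fun k => r ^ (N + k)); [exact Hp| | |].
  - intro k. apply Hr.
  - intro k. apply pow_le; lra.
  - intro K. rewrite (sum_eq _ (fun k => r ^ N * r ^ k)).
    rewrite sum_scal_lB, tech3 by lra.
    assert (0 <= r ^ S K) by (apply pow_le; lra).
    assert ((1 - r ^ S K) / (1 - r) <= 1 / (1 - r)).
    { unfold Rdiv. apply Rmult_le_compat_r. left; apply Rinv_0_lt_compat; lra. lra. }
    assert (r ^ N * (1 / (1 - r)) <= eps).
    { unfold Rdiv. rewrite Rmult_1_l. apply Rmult_le_reg_r with (1 - r). lra.
      rewrite Rmult_assoc, Rinv_l by lra. lra. }
    assert (0 <= r ^ N) by (apply pow_le; lra).
    nra.
    intros i _. apply pow_add.
Qed.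

End Chernoff.

Lemma sum_ind_eq (v : nat) (c : nat -> R) N :
  sum_f_R0 (fun j => if Nat.eqb j v then c j else 0) N = if Nat.leb v N then c v else 0.
Proof.
  induction N.
  - simpl. destruct v; simpl; reflexivity.
  - rewrite sum_S, IHN.
    destruct (Nat.eqb_spec (S N) v); destruct (Nat.leb_spec v N); destruct (Nat.leb_spec v (S N));
      subst; try lia; ring.
Qed.

Lemma sum_le_min (M : nat) c N : 0 <= c ->
  sum_f_R0 (fun j => if Nat.ltb M j then 0 else c) N <= INR (S M) * c.
Proof.
  intros Hc.
  assert (E : sum_f_R0 (fun j => if Nat.ltb M j then 0 else c) N = INR (S (Nat.min N M)) * c).
  { induction N.
    - simpl. destruct M; simpl; ring.
    - rewrite sum_S, IHN. destruct (Nat.ltb_spec M (S N)).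
      + replace (Nat.min (S N) M) with (Nat.min N M) by lia. ring.
      + replace (Nat.min (S N) M) with (S (Nat.min N M)) by lia.
        rewrite (S_INR (S _)). ring. }
  rewrite E. apply Rmult_le_compat_r; auto. apply le_INR. lia.
Qed.

Lemma count_le om j n : (count_obs om j n <= n)%nat.
Proof. induction n; simpl; auto. destruct (Nat.eqb (om n) j); lia. Qed.

Lemma cnt_count om j n : cnt (fun x => Nat.eqb x j) om n = count_obs om j n.
Proof. induction n; simpl; auto. Qed.

Lemma cnt_neg (h : nat -> bool) om n : (cnt (fun x => negb (h x)) om n + cnt h om n = n)%nat.
Proof. induction n; simpl; auto. destruct (h (om n)); simpl; lia. Qed.

Lemma tail_count om M N n :
  sum_f_R0 (fun j => if Nat.ltb M j then INR (count_obs om j n) else 0) N <= INR (cnt (Nat.ltb M) om n).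
Proof.
  induction n.
  - simpl. rewrite (sum_eq _ (fun _ => 0)). rewrite sum_zero. lra.
    intros i _. destruct (Nat.ltb M i); reflexivity.
  - rewrite (sum_eq _ (fun j => (if Nat.ltb M j then INR (count_obs om j n) else 0) +
        (if Nat.eqb j (om n) then (if Nat.ltb M j then 1 else 0) else 0))).
    rewrite sum_plus, sum_ind_eq. simpl cnt. rewrite plus_INR.
    destruct (Nat.leb (om n) N); destruct (Nat.ltb M (om n)); simpl; lra.
    intros i _. simpl count_obs. rewrite plus_INR.
    rewrite (Nat.eqb_sym i (om n)).
    destruct (Nat.eqb (om n) i); destruct (Nat.ltb M i); simpl; ring.
Qed.

Section Main.
Variable p0 : rseq.
Hypothesis Hp : forall k, 0 <= p0 k.
Hypothesis Hs1 : infinite_sum p0 1.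

Lemma F_le1 N : sum_f_R0 p0 N <= 1.
Proof. apply partial_le_sum; auto. Qed.

Lemma p0_le1 k : p0 k <= 1.
Proof. apply term_le_sum with (f := p0); auto. Qed.

Lemma pmf_S1_eq j N : sum_f_R0 (fun x => if Nat.eqb x j then p0 x else 0) N <= p0 j.
Proof. rewrite sum_ind_eq. destruct (Nat.leb j N). lra. apply Hp. Qed.

Lemma pmf_S2_eq j N : sum_f_R0 (fun x => if Nat.eqb x j then 0 else p0 x) N <= 1 - p0 j.
Proof.
  rewrite (sum_eq _ (fun x => p0 x + (-1) * (if Nat.eqb x j then p0 x else 0))).
  rewrite sum_plus, sum_scal_lB, sum_ind_eq.
  destruct (Nat.leb_spec j N).
  - pose proof (F_le1 N). lra.
  - destruct j as [|j]. lia.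
    assert (sum_f_R0 p0 N <= sum_f_R0 p0 j) by (apply sum_mono_nonneg; auto; lia).
    pose proof (F_le1 (S j)). rewrite sum_S in H1. lra.
  - intros i _. destruct (Nat.eqb i j); ring.
Qed.

Lemma tail_S2 M N : sum_f_R0 (fun x => if Nat.ltb M x then 0 else p0 x) N <= sum_f_R0 p0 M.
Proof.
  assert (E : sum_f_R0 (fun x => if Nat.ltb M x then 0 else p0 x) N = sum_f_R0 p0 (Nat.min N M)).
  { induction N.
    - simpl. destruct M; reflexivity.
    - rewrite sum_S, IHN. destruct (Nat.ltb_spec M (S N)).
      + replace (Nat.min (S N) M) with (Nat.min N M) by lia. ring.
      + replace (Nat.min (S N) M) with (S (Nat.min N M)) by lia. rewrite sum_S.
        replace (S (Nat.min N M)) with (S N) by lia. reflexivity. }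
  rewrite E. apply sum_mono_nonneg; auto. lia.
Qed.

Lemma tail_S1 M N : sum_f_R0 (fun x => if Nat.ltb M x then p0 x else 0) N <= 1 - sum_f_R0 p0 M.
Proof.
  assert (E : sum_f_R0 (fun x => if Nat.ltb M x then p0 x else 0) N =
     sum_f_R0 p0 N - sum_f_R0 (fun x => if Nat.ltb M x then 0 else p0 x) N).
  { rewrite (sum_eq (fun x => if Nat.ltb M x then p0 x else 0)
       (fun x => p0 x + (-1) * (if Nat.ltb M x then 0 else p0 x))).
    rewrite sum_plus, sum_scal_lB. ring.
    intros i _. destruct (Nat.ltb M i); ring. }
  rewrite E.
  assert (E2 : sum_f_R0 (fun x => if Nat.ltb M x then 0 else p0 x) N = sum_f_R0 p0 (Nat.min N M)).
  { clear E. induction N.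
    - simpl. destruct M; reflexivity.
    - rewrite sum_S, IHN. destruct (Nat.ltb_spec M (S N)).
      + replace (Nat.min (S N) M) with (Nat.min N M) by lia. ring.
      + replace (Nat.min (S N) M) with (S (Nat.min N M)) by lia. rewrite sum_S.
        replace (S (Nat.min N M)) with (S N) by lia. reflexivity. }
  rewrite E2. destruct (Nat.le_ge_cases N M).
  - replace (Nat.min N M) with N by lia. pose proof (F_le1 M). lra.
  - replace (Nat.min N M) with M by lia. pose proof (F_le1 N). lra.
Qed.

End Main.

Lemma AS_forall_le p0 x0 (Hp : forall k, 0 <= p0 k) (Hx : p0 x0 < 1) (Q : nat -> sample -> Prop) M :
  (forall j, (j <= M)%nat -> almost_surely p0 (Q j)) ->
  almost_surely p0 (fun om => forall j, (j <= M)%nat -> Q j om).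
Proof.
  induction M; intro H.
  - apply (AS_mono p0 (Q O)). intros om HQ j Hj. replace j with O by lia. exact HQ. apply H. lia.
  - apply (AS_mono p0 (fun om => (forall j, (j <= M)%nat -> Q j om) /\ Q (S M) om)).
    intros om [H1 H2] j Hj. destruct (Nat.le_gt_cases j M). auto. replace j with (S M) by lia. auto.
    apply (AS_and p0 Hp x0); auto.
Qed.

Lemma ev_forall (R0 : nat -> nat -> Prop) M :
  (forall j, (j <= M)%nat -> exists n0, forall n, (n0 <= n)%nat -> R0 j n) ->
  exists n0, forall n, (n0 <= n)%nat -> forall j, (j <= M)%nat -> R0 j n.
Proof.
  induction M; intro H.
  - destruct (H O (le_n _)) as [n0 Hn0]. exists n0. intros n Hn j Hj. replace j with O by lia. auto.
  - destruct IHM as [n1 Hn1]. intros j Hj. apply H. lia.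
    destruct (H (S M) (le_n _)) as [n2 Hn2]. exists (Nat.max n1 n2). intros n Hn j Hj.
    destruct (Nat.le_gt_cases j M). apply Hn1; auto; lia. replace j with (S M) by lia. apply Hn2; lia.
Qed.

Lemma sq_bound x y : 0 < y -> x^2 < y^2 -> -y < x < y.
Proof. intros. split; nra. Qed.

Lemma div_lt c n a : 0 < n -> c < n * a -> c / n < a.
Proof. intros. apply Rmult_lt_reg_r with n; auto. unfold Rdiv. rewrite Rmult_assoc, Rinv_l by lra. lra. Qed.

Lemma div_gt c n a : 0 < n -> n * a < c -> a < c / n.
Proof. intros. apply Rmult_lt_reg_r with n; auto. unfold Rdiv. rewrite Rmult_assoc, Rinv_l by lra. lra. Qed.

Theorem proposition3 (p0 : rseq) (s : nat) :
  is_pmf p0 -> support_ok p0 -> inC p0 ->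
  (0 < s)%nat -> is_knot p0 s ->
  almost_surely p0 (fun omega =>
    exists n0 : nat, forall n : nat, (n0 <= n)%nat ->
      forall q : rseq, is_LSE omega n q -> is_knot q s).
Proof.
  intros [Hp Hs1] Hsupp HC Hs [Hs1' HD].
  set (Dl := Defs.Delta p0 s) in *.
  assert (Hx0 : p0 O < 1).
  { assert (p0 1%nat > 0). { destruct Hsupp as [H|[S0 [HS0 H]]]. apply H. apply H. lia. }
    pose proof (F_le1 p0 Hp Hs1 1). simpl in H0. lra. }
  assert (HDl2 : Dl <= 2).
  { unfold Dl, Defs.Delta. pose proof (p0_le1 p0 Hp Hs1 (S s)). pose proof (p0_le1 p0 Hp Hs1 (pred s)).
    pose proof (Hp s). lra. }
  set (eps := Dl^2/32).
  assert (Heps : 0 < eps) by (unfold eps; nra).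
  assert (Heps1 : eps <= 1/8) by (unfold eps; nra).
  destruct (Hs1 (eps/8)) as [M HM]. lra. specialize (HM M (le_n _)). unfold Rdist in HM.
  apply Rabs_def2 in HM.
  set (T := 1 - sum_f_R0 p0 M).
  assert (HT : 0 <= T < eps/8). { pose proof (F_le1 p0 Hp Hs1 M). unfold T. lra. }
  set (eta := eps / (4 * (INR M + 2))).
  assert (HM0 : 0 <= INR M) by apply pos_INR.
  assert (Heta : 0 < eta) by (unfold eta; apply Rdiv_lt_0_compat; lra).
  assert (Heta2 : eta * (INR M + 2) = eps / 4) by (unfold eta; field; lra).
  assert (Heta1 : eta <= 1) by nra.
  set (Good := fun om =>
    (forall j, (j <= M)%nat ->
      (exists n0, forall n, (n0 <= n)%nat -> INR (cnt (fun x => Nat.eqb x j) om n) < INR n * (p0 j + eta)) /\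
      (exists n0, forall n, (n0 <= n)%nat -> INR (cnt (fun x => negb (Nat.eqb x j)) om n) < INR n * ((1 - p0 j) + eta))) /\
    (exists n0, forall n, (n0 <= n)%nat -> INR (cnt (Nat.ltb M) om n) < INR n * (T + eta))).
  assert (AG : almost_surely p0 Good).
  { apply (AS_and p0 Hp O); auto.
    - apply (AS_forall_le p0 O Hp Hx0 (fun j om =>
      (exists n0, forall n, (n0 <= n)%nat -> INR (cnt (fun x => Nat.eqb x j) om n) < INR n * (p0 j + eta)) /\
      (exists n0, forall n, (n0 <= n)%nat -> INR (cnt (fun x => negb (Nat.eqb x j)) om n) < INR n * ((1 - p0 j) + eta)))).
      intros j Hj.
      apply (AS_and p0 Hp O); auto.
      + apply (BC p0 Hp O (fun x => Nat.eqb x j) (p0 j) eta); auto.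
        * intro N. apply pmf_S1_eq; auto.
        * intro N. apply pmf_S2_eq; auto.
      + apply (BC p0 Hp O (fun x => negb (Nat.eqb x j)) (1 - p0 j) eta); auto.
        * pose proof (p0_le1 p0 Hp Hs1 j). lra.
        * intro N. rewrite (sum_eq _ (fun x => if Nat.eqb x j then 0 else p0 x)).
          apply pmf_S2_eq; auto. intros i _. destruct (Nat.eqb i j); reflexivity.
        * intro N. rewrite (sum_eq _ (fun x => if Nat.eqb x j then p0 x else 0)).
          pose proof (pmf_S1_eq p0 Hp j N). lra. intros i _. destruct (Nat.eqb i j); reflexivity.
    - apply (BC p0 Hp O (Nat.ltb M) T eta); auto. lra.
      + intro N. apply tail_S1; auto.
      + intro N. unfold T. replace (1 - (1 - sum_f_R0 p0 M)) with (sum_f_R0 p0 M) by ring.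
        apply tail_S2; auto. }
  apply (AS_mono p0 Good); auto.
  intros om [HG1 [n2 Hn2]].
  destruct (ev_forall (fun j n =>
      INR (cnt (fun x => Nat.eqb x j) om n) < INR n * (p0 j + eta) /\
      INR (cnt (fun x => negb (Nat.eqb x j)) om n) < INR n * ((1 - p0 j) + eta)) M) as [n1 Hn1].
  { intros j Hj. destruct (HG1 j Hj) as [[a Ha] [b Hb]]. exists (Nat.max a b).
    intros n Hn. split. apply Ha; lia. apply Hb; lia. }
  exists (S (Nat.max n1 n2)). intros n Hn q Hq.
  assert (Hnpos : 0 < INR n) by (apply lt_0_INR; lia).
  set (B := INR (S M) * eta^2 + (T + eta) + T).
  assert (HB : forall N, sum_f_R0 (fun j => (emp om n j - p0 j)^2) N <= B).
  { intro N.
    apply Rle_trans with (sum_f_R0 (fun j => (if Nat.ltb M j then 0 else eta^2) +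
       ((/ INR n) * (if Nat.ltb M j then INR (count_obs om j n) else 0) +
        (if Nat.ltb M j then p0 j else 0))) N).
    - apply sum_Rle. intros j _. cbv beta. unfold emp.
      pose proof (Hp j). pose proof (p0_le1 p0 Hp Hs1 j).
      pose proof (pos_INR (count_obs om j n)).
      assert (Hc : INR (count_obs om j n) <= INR n) by (apply le_INR, count_le).
      assert (He0 : 0 <= INR (count_obs om j n) / INR n).
      { unfold Rdiv. apply Rmult_le_pos; auto. left. apply Rinv_0_lt_compat; auto. }
      assert (He1 : INR (count_obs om j n) / INR n <= 1).
      { unfold Rdiv. apply Rmult_le_reg_r with (INR n); auto. rewrite Rmult_assoc, Rinv_l by lra. lra. }
      destruct (Nat.ltb_spec M j).
      + replace (/ INR n * INR (count_obs om j n)) with (INR (count_obs om j n) / INR n)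
          by (unfold Rdiv; ring).
        set (e := INR (count_obs om j n) / INR n) in *. nra.
      + destruct (Hn1 n ltac:(lia) j ltac:(lia)) as [A1 A2].
        rewrite cnt_count in A1.
        pose proof (cnt_neg (fun x => Nat.eqb x j) om n) as Hneg.
        apply (f_equal INR) in Hneg. rewrite plus_INR, cnt_count in Hneg.
        assert (L1 : INR (count_obs om j n) / INR n < p0 j + eta) by (apply div_lt; auto).
        assert (L2 : p0 j - eta < INR (count_obs om j n) / INR n) by (apply div_gt; auto; lra).
        set (e := INR (count_obs om j n) / INR n) in *.
        assert ((e - p0 j)^2 <= eta^2) by nra. lra.
    - rewrite !sum_plus, sum_scal_lB.
      pose proof (sum_le_min M (eta^2) N ltac:(nra)).
      pose proof (tail_count om M N n).
      pose proof (Hn2 n ltac:(lia)).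
      pose proof (tail_S1 p0 Hp Hs1 M N). fold T in H2.
      assert (/ INR n * sum_f_R0 (fun j => if Nat.ltb M j then INR (count_obs om j n) else 0) N < T + eta).
      { rewrite Rmult_comm. apply div_lt; auto. lra. }
      unfold B. lra. }
  pose proof (LSE_close om n q p0 B HC Hq HB) as Hcl.
  assert (H2B : 2 * B < (Dl/4)^2).
  { unfold B. rewrite S_INR. assert (eta^2 <= eta) by nra.
    assert ((INR M + 1) * eta^2 <= (INR M + 1) * eta) by (apply Rmult_le_compat_l; lra).
    unfold eps in *. nra. }
  assert (HDl : 0 < Dl / 4) by lra.
  destruct (sq_bound (q (S s) - p0 (S s)) (Dl/4) HDl) as [a1 a2]. pose proof (Hcl (S s)). lra.
  destruct (sq_bound (q s - p0 s) (Dl/4) HDl) as [b1 b2]. pose proof (Hcl s). lra.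
  destruct (sq_bound (q (pred s) - p0 (pred s)) (Dl/4) HDl) as [c1 c2]. pose proof (Hcl (pred s)). lra.
  split; auto. unfold Dl, Defs.Delta in *. lra.
Qed.
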